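(* Let $(X,Y,Z)$ be a random vector where $Y$ takes values in a countable set $\mathcal Y$ with $\mathbb P(Y\in\mathcal Y)=1$. Then $$0\le \mathrm{ETV}(X,Y,Z)\le 1 .$$ Moreover, when $\mathcal Y$ is finite, the upper bound $\mathrm{ETV}(X,Y,Z)=1$ is achieved when, conditional on $Z$, $X$ deterministically determines $Y$ (i.e. $Y$ is a measurable function of $(X,Z)$) and $\mathbb P(Y=y\mid Z)=1/|\mathcal Y|$ almost surely for all $y\in\mathcal Y$.
   Context: For distributions $\mathcal L_1,\mathcal L_2$ on the same space, $\mathrm{TV}(\mathcal L_1,\mathcal L_2)=\sup_A|\mathcal L_1(A)-\mathcal L_2(A)|$ (half the $L_1$ distance between densities/mass functions). The expected total variation is $$\mathrm{ETV}(X,Y,Z)=\frac{1}{1-1/|\mathcal Y|}\,\mathbb E\big[\mathrm{TV}\big(\mathcal L(Y\mid X,Z),\mathcal L(Y\mid Z)\big)\big],$$ where $|\mathcal Y|$ is the support size of $Y$; if $|\mathcal Y|=\infty$ the normalizing factor $\frac{1}{1-1/|\mathcal Y|}$ is replaced by $1$. Here $\mathcal L(\cdot\mid\cdot)$ denotes conditional distribution. *)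

(* Defs.v *)
From HB Require Import structures.
From mathcomp Require Import all_boot all_order all_algebra.
From mathcomp Require Import finmap.
From mathcomp Require Import all_classical all_reals all_analysis.
Set Implicit Arguments. Unset Strict Implicit. Unset Printing Implicit Defensive.
Import Order.TTheory GRing.Theory Num.Theory.
Local Open Scope classical_set_scope.
Local Open Scope ring_scope.

Section ETVDefs.
Context {R : realType} {d : measure_display} {Omega : measurableType d}.

Definition is_pmf (p : nat -> R) : Prop :=
  (forall y, 0 <= p y) /\ (\sum_(0 <= y <oo) (p y)%:E = 1)%E.

(* q is (a version of) the conditional distribution (pmf) of Y given W:
   a regular conditional pmf, measurable in the conditioning variable, such that
   P(Y = y, W in A) = E[ q(W)(y) ; W in A ] for every measurable A. *)
Definition cond_pmf {dW : measure_display} {TW : measurableType dW}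
  (P : probability Omega R) (Y : Omega -> nat) (W : Omega -> TW)
  (q : TW -> nat -> R) : Prop :=
  (forall t, is_pmf (q t)) /\
  (forall y, measurable_fun setT (fun t => q t y)) /\
  (forall y (A : set TW), measurable A ->
     (P ([set w | Y w = y] `&` (W @^-1` A)) =
      \int[P]_(w in W @^-1` A) (q (W w) y)%:E)%E).

Definition tv (p q : nat -> R) : \bar R :=
  ((2 : R)^-1)%:E * (\sum_(0 <= y <oo) (`|p y - q y|)%:E)%E.

Definition supp (P : probability Omega R) (Y : Omega -> nat) : set nat :=
  [set y | (0 < P [set w | Y w = y])%E].

Definition etv_factor (S : set nat) : R :=
  if pselect (finite_set S) then (1 - (#|` fset_set S |%fset%:R)^-1)^-1 else 1.

(* ETV(X,Y,Z), given versions f of L(Y | X,Z) and g of L(Y | Z) *)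
Definition ETV {dX dZ : measure_display} {TX : measurableType dX}
  {TZ : measurableType dZ} (P : probability Omega R)
  (X : Omega -> TX) (Y : Omega -> nat) (Z : Omega -> TZ)
  (f : TX * TZ -> nat -> R) (g : TZ -> nat -> R) : \bar R :=
  ((etv_factor (supp P Y))%:E * \int[P]_w tv (f (X w, Z w)) (g (Z w)))%E.

End ETVDefs.

(* Main.v *)
Require Import Defs.
From HB Require Import structures.
From mathcomp Require Import all_boot all_order all_algebra.
From mathcomp Require Import finmap.
From mathcomp Require Import all_classical all_reals all_analysis.
From mathcomp Require Import measurable_realfun.
From mathcomp Require Import ring lra.
Set Implicit Arguments. Unset Strict Implicit. Unset Printing Implicit Defensive.
Import Order.TTheory GRing.Theory Num.Theory.
Import numFieldNormedType.Exports.
Local Open Scope classical_set_scope.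
Local Open Scope ring_scope.
Section pure.
Context (R : realType).
Local Open Scope ereal_scope.

Lemma pmf_bnd (p : nat -> R) : is_pmf p -> forall y, (0 <= p y <= 1)%R.
Proof.
case=> p0 ps y; rewrite p0 /= -lee_fin -ps.
apply: le_trans (nneseries_lim_ge y.+1 _) => //.
  rewrite big_nat_recr //=; apply: lee_paddl => //.
  by apply: sume_ge0 => i _; rewrite lee_fin.
by move=> n _ _; rewrite lee_fin.
Qed.

Lemma seq_bound (s : seq nat) : exists k, forall y, y \in s -> (y < k)%N.
Proof.
elim: s => [|a s [k hk]]; first by exists 0%N.
exists (maxn k a.+1) => y; rewrite in_cons => /orP[/eqP ->|ys].
  by rewrite leq_max ltnSn orbT.
by rewrite leq_max hk.
Qed.

Lemma sum_iota_mem (F : nat -> R) s k : uniq s -> (forall y, y \in s -> (y < k)%N) ->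
  (\sum_(0 <= i < k | i \in s) F i = \sum_(i <- s) F i)%R.
Proof.
move=> us sk; rewrite -big_filter; apply: perm_big.
apply: uniq_perm; [exact: filter_uniq (iota_uniq _ _) | exact: us |].
move=> y; rewrite mem_filter mem_index_iota /=.
by apply/andP/idP => [[]//|ys]; split => //; exact: sk.
Qed.

Lemma tv_ge0 (p q : nat -> R) : 0 <= tv p q.
Proof.
rewrite /tv mule_ge0 // ?lee_fin //.
by apply: nneseries_ge0 => y _ _; rewrite lee_fin.
Qed.

Lemma tv_ub (p q : nat -> R) (s : seq nat) : is_pmf p -> is_pmf q -> uniq s ->
  tv p q <= (1 - \sum_(y <- s) p y * q y)%:E.
Proof.
move=> hp hq us.
have [k sk] := seq_bound s.
have pb := pmf_bnd hp; have qb := pmf_bnd hq.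
set A := \sum_(0 <= y <oo) (`|p y - q y|)%:E.
set sg := (\sum_(y <- s) p y * q y)%R.
have H : A + (2 * sg)%:E <= 2%:E.
  apply: (@le_trans _ _ (A + \sum_(0 <= y <oo) ((2 * (p y * q y)) * (y \in s)%:R)%:E)).
    apply: leeD2l.
    have -> : (2 * sg = \sum_(0 <= y < k) (2 * (p y * q y)) * (y \in s)%:R)%R.
      rewrite [RHS](eq_bigr (fun y => if y \in s then 2 * (p y * q y) else 0)%R);
        last by move=> i _; case: (i \in s); rewrite ?mulr1 ?mulr0.
      by rewrite -big_mkcond /= sum_iota_mem // /sg mulr_sumr.
    rewrite -sumEFin; apply: nneseries_lim_ge => n _ _.
    by rewrite lee_fin mulr_ge0 // ?mulr_ge0 //; case/andP: (pb n); case/andP: (qb n).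
  rewrite -nneseriesD; last 2 first.
  - by move=> i _ _; rewrite lee_fin.
  - move=> i _ _; rewrite lee_fin mulr_ge0 // ?mulr_ge0 //.
    by case/andP: (pb i). by case/andP: (qb i).
  apply: (@le_trans _ _ (\sum_(0 <= y <oo) ((p y)%:E + (q y)%:E))).
    apply: lee_nneseries.
      move=> i _ _; rewrite adde_ge0 // lee_fin ?mulr_ge0 //.
      by case/andP: (pb i). by case/andP: (qb i).
    move=> n _; rewrite -EFinD lee_fin.
    case/andP: (pb n) => p0 p1; case/andP: (qb n) => q0 q1.
    case: (n \in s); rewrite ?mulr1 ?mulr0 ?addr0.
      rewrite -lerBrDr ler_norml; apply/andP; split; nra.
    by rewrite ler_norml; apply/andP; split; nra.
  rewrite nneseriesD; last 2 first.
  - by move=> i _ _; rewrite lee_fin; case/andP: (pb i).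
  - by move=> i _ _; rewrite lee_fin; case/andP: (qb i).
  by case: hp => _ ->; case: hq => _ ->; rewrite -EFinD.
rewrite -leeBrDr // -EFinB in H.
rewrite /tv; apply: le_trans (lee_wpmul2l _ H) _; first by rewrite lee_fin.
by rewrite -EFinM lee_fin le_eqVlt; apply/orP; left; apply/eqP; field.
Qed.

Lemma tv_lb (p q c : nat -> R) (s : seq nat) : uniq s -> (forall y, `|c y| <= 1)%R ->
  ((2^-1 * \sum_(y <- s) (p y - q y) * c y)%:E <= tv p q).
Proof.
move=> us c1; have [k sk] := seq_bound s.
rewrite /tv EFinM; apply: lee_wpmul2l; first by rewrite lee_fin.
apply: (@le_trans _ _ (\sum_(0 <= y < k) `|p y - q y|)%R%:E).
  rewrite lee_fin -(sum_iota_mem _ us sk) big_mkcond /= ler_sum // => i _.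
  case: (i \in s) => //.
  apply: le_trans (ler_norm _) _; rewrite normrM.
  by apply: ler_piMr => //; exact: c1.
rewrite -sumEFin; apply: nneseries_lim_ge => n _ _.
by rewrite lee_fin.
Qed.
End pure.
Section transfer.
Context (R : realType) (d dT : measure_display) (Om : measurableType d)
  (T : measurableType dT) (P : {measure set Om -> \bar R}) (W : Om -> T).
Hypothesis mW : measurable_fun setT W.
Local Open Scope ereal_scope.
Import HBNNSimple.

Lemma transfer_simple (s : {nnsfun T >-> R}) (u : Om -> \bar R) :
  (forall w, 0 <= u w) -> measurable_fun setT u ->
  \int[P]_w ((s (W w))%:E * u w) =
  \sum_(r \in range s) r%:E * \int[P]_(w in W @^-1` (s @^-1` [set r])) u w.
Proof.
move=> u0 mu.
transitivity (\int[P]_w (\sum_(r \in range s)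
    ((r * \1_(s @^-1` [set r]) (W w))%:E * u w))).
  apply: eq_integral => w _.
  rewrite -ge0_mule_fsuml => [|y]; last exact: nnfun_muleindic_ge0.
  by rewrite fsumEFin // -(fimfunE _ (W w)).
rewrite ge0_integral_fsum//; last 2 first.
  - move=> r; apply: emeasurable_funM => //; apply/measurable_EFinP.
    apply: measurable_funM => //; apply: measurableT_comp => //.
  - by move=> m y _; rewrite mule_ge0 ?u0// nnfun_muleindic_ge0.
apply: eq_fsbigr => r rs.
under eq_integral do rewrite EFinM -muleA.
rewrite ge0_integralZl//; last 3 first.
- apply: emeasurable_funM => //; apply/measurable_EFinP.
  apply: measurableT_comp => //; exact: measurable_indic.
- by move=> w _; rewrite mule_ge0// lee_fin.
- by move: rs; rewrite inE => -[t _ <-]; rewrite lee_fin.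
congr (_ * _); rewrite [RHS]integral_mkcond; apply: eq_integral => w _.
by rewrite epatch_indic /= muleC.
Qed.

Lemma mpreimage (B : set T) : measurable B -> measurable (W @^-1` B).
Proof. by move=> mB; rewrite -[_ @^-1` _]setTI; exact: mW. Qed.

Lemma transfer (u v : Om -> R) :
  (forall w, (0 <= u w)%R) -> (forall w, (0 <= v w)%R) ->
  measurable_fun setT u -> measurable_fun setT v ->
  (forall B, measurable B -> \int[P]_(w in W @^-1` B) (u w)%:E =
                             \int[P]_(w in W @^-1` B) (v w)%:E) ->
  forall phi : T -> R, (forall t, (0 <= phi t)%R) -> measurable_fun setT phi ->
  \int[P]_w ((phi (W w))%:E * (u w)%:E) = \int[P]_w ((phi (W w))%:E * (v w)%:E).
Proof.
move=> u0 v0 mu mv huv phi phi0 mphi.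
have mphie : measurable_fun setT (EFin \o phi) by apply/measurable_EFinP.
pose h := nnsfun_approx (@measurableT _ T) mphie.
suff key : forall u : Om -> R, (forall w, (0 <= u w)%R) -> measurable_fun setT u ->
    \int[P]_w ((phi (W w))%:E * (u w)%:E) =
    limn (fun n => \int[P]_w ((h n (W w))%:E * (u w)%:E)).
  rewrite !key//; apply: congr_lim; apply/funext => n.
  rewrite !transfer_simple//; try (by move=> w; rewrite lee_fin);
    try exact/measurable_EFinP.
  apply: eq_fsbigr => r _; rewrite huv//.
move=> u' u0' mu'.
transitivity (\int[P]_w limn (fun n => (h n (W w))%:E * (u' w)%:E)).
  apply: eq_integral => w _; apply/esym/cvg_lim => //; apply: cvgeZr => //.
  have := @cvg_nnsfun_approx _ _ R setT (@measurableT _ T) (EFin \o phi) mphie.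
  by move=> /(_ _ (W w) I); apply => t _; rewrite lee_fin.
apply: monotone_convergence => //.
- move=> n; apply: emeasurable_funM; last exact/measurable_EFinP.
  apply/measurable_EFinP; apply: measurableT_comp => //.
- by move=> n w _; rewrite mule_ge0// lee_fin.
- move=> w _ a b ab; rewrite lee_wpmul2r ?lee_fin//.
  exact/lefP/nd_nnsfun_approx.
Qed.
End transfer.

Section main.
Context (R : realType) (d dX dZ : measure_display)
  (Omega : measurableType d) (TX : measurableType dX) (TZ : measurableType dZ)
  (P : probability Omega R)
  (X : Omega -> TX) (Y : Omega -> nat) (Z : Omega -> TZ)
  (f : TX * TZ -> nat -> R) (g : TZ -> nat -> R).
Hypotheses (mX : measurable_fun setT X) (mZ : measurable_fun setT Z)
  (mY : forall y, measurable [set w | Y w = y])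
  (cf : cond_pmf P Y (fun w => (X w, Z w)) f) (cg : cond_pmf P Y Z g).

Let W := fun w => (X w, Z w).
Let mW : measurable_fun setT W. Proof. exact: measurable_fun_pair. Qed.
Let fy y w := f (W w) y.
Let gy y w := g (Z w) y.

Definition bm (F : Omega -> R) :=
  measurable_fun setT F /\ exists M, forall w, `|F w| <= M.

Lemma bm_int F : bm F -> P.-integrable setT (EFin \o F).
Proof.
move=> [mF [M hM]]; apply: measurable_bounded_integrable => //.
  by apply: le_lt_trans (probability_le1 P measurableT) _; rewrite ltry.
rewrite /bounded_near; near=> M' => w _ /=; apply: le_trans (hM w) _.
by near: M'; apply: nbhs_pinfty_ge; exact: num_real.
Unshelve. all: end_near. Qed.

Lemma bm_cst c : bm (fun=> c).
Proof. by split; [exact: measurable_cst | exists `|c|]. Qed.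

Lemma bmD F G : bm F -> bm G -> bm (fun w => F w + G w).
Proof.
move=> [mF [M hM]] [mG [N hN]]; split; first exact: measurable_funD.
by exists (M + N) => w; apply: le_trans (ler_normD _ _) _; exact: lerD.
Qed.

Lemma bmN F : bm F -> bm (fun w => - F w).
Proof.
move=> [mF [M hM]]; split; first exact: measurableT_comp.
by exists M => w; rewrite normrN.
Qed.

Lemma bmM F G : bm F -> bm (fun w => F w * G w) -> bm G -> bm (fun w => F w * G w).
Proof. by []. Qed.

Lemma bmM' F G : bm F -> bm G -> bm (fun w => F w * G w).
Proof.
move=> [mF [M hM]] [mG [N hN]]; split; first exact: measurable_funM.
exists (M * N) => w; rewrite normrM; apply: ler_pM => //.
Qed.

Lemma bm_sum (I : Type) (s : seq I) (F : I -> Omega -> R) :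
  (forall i, bm (F i)) -> bm (fun w => \sum_(i <- s) F i w).
Proof.
move=> hF; elim: s => [|a s ih].
  by under [X in bm X]eq_fun do rewrite big_nil; exact: bm_cst.
by under [X in bm X]eq_fun do rewrite big_cons; exact: bmD.
Qed.

Let RI F := Rintegral P setT F.

Lemma RI_E F : bm F -> (\int[P]_w (F w)%:E = (RI F)%:E)%E.
Proof.
move=> bF; rewrite /RI /Rintegral fineK //.
by apply: integrable_fin_num => //; exact: bm_int.
Qed.

Lemma RI_sum (I : Type) (s : seq I) (F : I -> Omega -> R) :
  (forall i, bm (F i)) -> RI (fun w => \sum_(i <- s) F i w) = \sum_(i <- s) RI (F i).
Proof.
move=> hF; elim: s => [|a s ih].
  rewrite big_nil /RI; under eq_Rintegral do rewrite big_nil.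
  by rewrite Rintegral_cst // mul0r.
rewrite big_cons -ih /RI; under eq_Rintegral do rewrite big_cons.
by rewrite RintegralD //; apply: bm_int => //; apply: bm_sum.
Qed.

Lemma RI_cst c : RI (fun=> c) = c.
Proof. by rewrite /RI Rintegral_cst // (_ : fine (P setT) = 1%R) ?mulr1 // probability_setT. Qed.


Lemma bmZ c F : bm F -> bm (fun w => c * F w).
Proof. by move=> bF; apply: bmM' => //; exact: bm_cst. Qed.

Lemma bmB F G : bm F -> bm G -> bm (fun w => F w - G w).
Proof. by move=> bF bG; apply: bmD => //; exact: bmN. Qed.

Lemma RI_B F G : bm F -> bm G -> RI (fun w => F w - G w) = RI F - RI G.
Proof. by move=> bF bG; rewrite /RI RintegralB //; exact: bm_int. Qed.

Lemma RI_D F G : bm F -> bm G -> RI (fun w => F w + G w) = RI F + RI G.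
Proof. by move=> bF bG; rewrite /RI RintegralD //; exact: bm_int. Qed.

Lemma RI_Z c F : bm F -> RI (fun w => c * F w) = c * RI F.
Proof. by move=> bF; rewrite /RI RintegralZl //; exact: bm_int. Qed.

Lemma RI_le F G : bm F -> bm G -> (forall w, F w <= G w) -> RI F <= RI G.
Proof. by move=> bF bG FG; rewrite /RI le_Rintegral //; exact: bm_int. Qed.

Local Notation mu := (P : {measure set Omega -> \bar R}).

Lemma pmf_f t y : (0 <= f t y <= 1)%R. Proof. exact: pmf_bnd (cf.1 t) y. Qed.
Lemma pmf_g t y : (0 <= g t y <= 1)%R. Proof. exact: pmf_bnd (cg.1 t) y. Qed.

Lemma bm_fy y : bm (fy y).
Proof.
split; first exact: (measurableT_comp (cf.2.1 y) mW).
exists 1 => w; have /andP[h0 h1] := pmf_f (W w) y; by rewrite ger0_norm.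
Qed.

Lemma bm_gy y : bm (gy y).
Proof.
split; first exact: (measurableT_comp (cg.2.1 y) mZ).
exists 1 => w; have /andP[h0 h1] := pmf_g (Z w) y; by rewrite ger0_norm.
Qed.

Let p y := fine (mu [set w | Y w = y]).

Lemma EG y : (\int[P]_w (gy y w)%:E = mu [set w | Y w = y])%E.
Proof.
have := cg.2.2 y setT measurableT; rewrite preimage_setT setIT => h.
exact: (esym h).
Qed.

Lemma EF y : (\int[P]_w (fy y w)%:E = mu [set w | Y w = y])%E.
Proof.
have := cf.2.2 y setT measurableT; rewrite preimage_setT setIT => h.
exact: (esym h).
Qed.

Lemma RIg y : RI (gy y) = p y.
Proof. by rewrite /p -EG (RI_E (bm_gy y)). Qed.

Lemma RIf y : RI (fy y) = p y.
Proof. by rewrite /p -EF (RI_E (bm_fy y)). Qed.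

Lemma EFG y : RI (fun w => fy y w * gy y w) = RI (fun w => gy y w * gy y w).
Proof.
have := @transfer R d dZ Omega TZ P Z mZ (fy y) (gy y).
move=> /(_ _ _ (bm_fy y).1 (bm_gy y).1 _ (fun z => g z y) _ (cg.2.1 y)).
have H : (forall B, measurable B -> \int[P]_(w in Z @^-1` B) (fy y w)%:E =
                             \int[P]_(w in Z @^-1` B) (gy y w)%:E)%E.
  move=> B mB; rewrite -(cg.2.2 y B mB).
  have := cf.2.2 y (setT `*` B) (measurableX measurableT mB).
  have -> : (fun w => (X w, Z w)) @^-1` (setT `*` B) = Z @^-1` B.
    by apply/seteqP; split => w /=; [case | move=> Bw; split].
  by move=> ->.
move=> /(_ _ _ H) h.
rewrite /RI /Rintegral.
transitivity (fine (\int[P]_w ((g (Z w) y)%:E * (fy y w)%:E))%E).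
  by congr fine; apply: eq_integral => w _; rewrite EFinM muleC.
rewrite h; first by congr fine; apply: eq_integral => w _; rewrite EFinM.
- by move=> w; case/andP: (pmf_f (W w) y).
- by move=> w; case/andP: (pmf_g (Z w) y).
- by move=> t; case/andP: (pmf_g t y).
Qed.


Lemma sq_lb y (n : R) : 0 < n -> 2 * p y / n - n^-1 ^+ 2 <= RI (fun w => gy y w * gy y w).
Proof.
move=> n0.
apply: le_trans (_ : RI (fun w => 2 / n * gy y w - n^-1 ^+ 2) <= _).
  rewrite RI_B; [|exact: bmZ (bm_gy y)|exact: bm_cst].
  rewrite RI_Z ?RIg ?RI_cst; last exact: bm_gy.
  by rewrite mulrAC.
apply: RI_le; [exact: bmB (bmZ _ (bm_gy y)) (bm_cst _) | exact: bmM' (bm_gy y) (bm_gy y) |].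
move=> w; set x := gy y w; set a := n^-1.
have := sqr_ge0 (x - a); nra.
Qed.

Lemma mT : measurable_fun setT (fun w => tv (f (W w)) (g (Z w))).
Proof.
rewrite /tv; apply: measurable_funeM.
apply: (@ge0_emeasurable_sum _ Omega R setT (fun y w => (`|fy y w - gy y w|)%:E) xpredT).
- by move=> k w _ _; rewrite lee_fin.
- move=> k _; apply/measurable_EFinP; apply: measurableT_comp => //.
  exact: (bmB (bm_fy k) (bm_gy k)).1.
Qed.

Lemma int_ub (s : seq nat) : uniq s ->
  (\int[P]_w tv (f (W w)) (g (Z w)) <=
   (1 - \sum_(y <- s) RI (fun w => fy y w * gy y w))%:E)%E.
Proof.
move=> us.
have bS : bm (fun w => \sum_(y <- s) fy y w * gy y w).
  by apply: bm_sum => y; exact: bmM' (bm_fy y) (bm_gy y).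
have bF : bm (fun w => 1 - \sum_(y <- s) fy y w * gy y w).
  by apply: bmB => //; exact: bm_cst.
apply: le_trans (_ : _ <= \int[P]_w (1 - \sum_(y <- s) fy y w * gy y w)%:E)%E _.
  apply: ge0_le_integral => //.
  - by move=> w _; exact: tv_ge0.
  - exact: mT.
  - by apply/measurable_EFinP; case: bF.
  - by move=> w _; exact: tv_ub (cf.1 _) (cg.1 _) us.
rewrite (RI_E bF) lee_fin le_eqVlt; apply/orP; left; apply/eqP.
rewrite RI_B //; last exact: bm_cst.
rewrite RI_cst RI_sum //.
by move=> y; exact: bmM' (bm_fy y) (bm_gy y).
Qed.

Lemma sumP1 (S : set nat) : finite_set S -> mu (Y @^-1` S) = 1%E ->
  \sum_(y <- fset_set S) p y = 1.
Proof.
move=> fS PS.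
have : (\sum_(y <- fset_set S) (p y)%:E = 1)%E.
  rewrite -PS.
  have -> : Y @^-1` S = \bigcup_(y in S) [set w | Y w = y].
    apply/seteqP; split => w /=; first by move=> Sw; exists (Y w).
    by case=> y Sy ->.
  rewrite measure_fin_bigcup //; last first.
    by move=> i j _ _ [w [/= -> ->]].
  rewrite fsbig_finite //; apply: eq_bigr => y _; rewrite /p fineK //.
  exact: fin_num_measure.
by rewrite sumEFin => -[].
Qed.


Lemma full_of_null (S : set nat) :
  (forall y, ~ S y -> mu [set w | Y w = y] = 0%E) -> mu (Y @^-1` S) = 1%E.
Proof.
move=> hS.
have eA : Y @^-1` S = \bigcup_(y in S) [set w | Y w = y].
  apply/seteqP; split => w /=; first by move=> Sw; exists (Y w).
  by case=> y Sy ->.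
have mA : measurable (Y @^-1` S).
  by rewrite eA; apply: bigcup_measurable => k _; exact: mY.
have h0 : mu (~` (Y @^-1` S)) = 0%E.
  apply/eqP; rewrite eq_le measure_ge0 andbT.
  have := @measure_sigma_subadditive _ _ _ mu (~` (Y @^-1` S))
    (fun y => [set w | Y w = y] `&` ~` (Y @^-1` S)).
  move=> /(_ _ (measurableC mA)) H.
  apply: le_trans (H _ _) _.
  - by move=> n; apply: measurableI; [exact: mY | exact: measurableC].
  - by move=> w Aw; exists (Y w).
  rewrite eseries0 // => y _ _.
  case: (pselect (S y)) => Sy.
    rewrite (_ : _ `&` _ = set0) ?measure0 //.
    by apply/seteqP; split => w //= [Yw]; rewrite Yw.
  apply/eqP; rewrite eq_le measure_ge0 andbT -(hS y Sy).
  apply: le_measure; rewrite ?inE //.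
  by apply: measurableI; [exact: mY | exact: measurableC].
have hC : mu (~` (Y @^-1` S)) = (1 - mu (Y @^-1` S))%E := probability_setC P mA.
rewrite h0 in hC.
have fA : mu (Y @^-1` S) \is a fin_num := fin_num_measure _ _ mA.
rewrite -(fineK fA) in hC *; move: hC; rewrite -EFinB => -[] h.
congr (_%:E); lra.
Qed.

Lemma supp_null y : ~ supp P Y y -> mu [set w | Y w = y] = 0%E.
Proof.
move=> h; apply/eqP; rewrite eq_le measure_ge0 andbT leNgt; apply/negP => h'.
by apply: h; exact: h'.
Qed.

Lemma inv_nat01 (n : nat) : 0 <= (n%:R : R)^-1 <= 1.
Proof.
case: n => [|n]; first by rewrite invr0 lexx ler01.
by rewrite invr_ge0 ler0n /= invf_le1 // ?ler1n // ltr0n.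
Qed.

Lemma sum_cst_seq (s : seq nat) (c : R) : \sum_(i <- s) c = c * (size s)%:R.
Proof.
elim: s => [|a s ih]; first by rewrite big_nil mulr0.
by rewrite big_cons ih /= -addn1 natrD mulrDr mulr1 addrC.
Qed.

Lemma int_ub_n (S : set nat) : finite_set S -> mu (Y @^-1` S) = 1%E ->
  (0 < #|` fset_set S|)%N ->
  (\int[P]_w tv (f (W w)) (g (Z w)) <= (1 - (#|` fset_set S|%:R)^-1)%:E)%E.
Proof.
move=> fS PS n0; set s := fset_set S; set n := (#|` s|%:R : R).
have n0' : 0 < n by rewrite ltr0n.
apply: le_trans (int_ub (fset_uniq s)) _.
rewrite lee_fin lerB //.
under eq_bigr do rewrite EFG.
apply: le_trans (_ : \sum_(y <- s) (2 * p y / n - n^-1 ^+ 2) <= _); last first.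
  by apply: ler_sum => y _; apply: sq_lb.
rewrite sumrB -mulr_suml -mulr_sumr sumP1 // sum_cst_seq -/n.
have e : n^-1 ^+ 2 * n = n^-1 by field; rewrite gt_eqF.
rewrite e; lra.
Qed.


Lemma I0 : (0 <= \int[P]_w tv (f (W w)) (g (Z w)))%E.
Proof. by apply: integral_ge0 => w _; exact: tv_ge0. Qed.

Lemma I1 : (\int[P]_w tv (f (W w)) (g (Z w)) <= 1)%E.
Proof. by apply: le_trans (@int_ub [::] isT) _; rewrite big_nil subr0. Qed.

Lemma part1 : (0 <= ETV P X Y Z f g)%E /\ (ETV P X Y Z f g <= 1)%E.
Proof.
have i0 := I0; have i1 := I1.
rewrite /ETV /etv_factor; destruct (pselect (finite_set (supp P Y))) as [fS|nfS]; last by split => //; rewrite mul1e.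
set n := #|` fset_set (supp P Y)|.
have [hn|hn] := leqP n 1.
  have [n0|n0] := eqVneq n 0%N.
    by rewrite n0 invr0 subr0 invr1 mul1e.
  have -> : n = 1%N by apply/eqP; rewrite eqn_leq hn lt0n n0.
  by rewrite invr1 subrr invr0 mul0e.
have hI := int_ub_n fS (full_of_null supp_null) (ltnW hn).
have a1 : (n%:R : R)^-1 < 1 by rewrite invf_lt1 ?ltr0n ?ltr1n // (ltn_trans _ hn).
split.
  by apply: mule_ge0 => //; rewrite lee_fin invr_ge0 subr_ge0 ltW.
apply: le_trans (lee_wpmul2l _ hI) _; first by rewrite lee_fin invr_ge0 subr_ge0 ltW.
by rewrite -EFinM mulVf // gt_eqF // subr_gt0.
Qed.


Lemma mpre (S : set nat) : measurable (Y @^-1` S).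
Proof.
have -> : Y @^-1` S = \bigcup_(y in S) [set w | Y w = y].
  apply/seteqP; split => w /=; first by move=> Sw; exists (Y w).
  by case=> y Sy ->.
by apply: bigcup_measurable => k _; exact: mY.
Qed.

Lemma RI_ae F G : bm F -> bm G -> {ae P, forall w, F w = G w} -> RI F = RI G.
Proof.
move=> bF bG hae; rewrite /RI /Rintegral; congr fine.
apply: ae_eq_integral => //.
- by apply/measurable_EFinP; case: bF.
- by apply/measurable_EFinP; case: bG.
- by apply: filterS hae => w /= -> _.
Qed.

Lemma RI_ind A : measurable A -> RI (\1_A) = fine (mu A).
Proof. by move=> mA; rewrite /RI /Rintegral integral_indic // setIT. Qed.

Lemma bm_ind A : measurable A -> bm (\1_A).
Proof.
move=> mA; split; first exact: measurable_indic.
by exists 1 => w; rewrite indicE; case: (_ \in _); rewrite ?normr0 ?normr1.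
Qed.

Lemma part2 (Ycal : set nat) : finite_set Ycal -> (1 < #|` fset_set Ycal|)%N ->
   (exists h : TX * TZ -> nat, measurable_fun setT h /\ forall w, Y w = h (X w, Z w)) ->
   (forall y, Ycal y -> {ae P, forall w, g (Z w) y = (#|` fset_set Ycal|%:R)^-1}) ->
   P (Y @^-1` Ycal) = 1%E -> ETV P X Y Z f g = 1%E.
Proof.
move=> fY N2 [h [mh hY]] gU PY.
set s := fset_set Ycal; set N := (#|` s|%:R : R).
have N0 : 0 < N by rewrite ltr0n (ltn_trans _ N2).
have a1 : N^-1 < 1 by rewrite invf_lt1 // ltr1n.
have pY y : Ycal y -> mu [set w | Y w = y] = N^-1%:E.
  move=> Yy; rewrite -EG (RI_E (bm_gy y)) (RI_ae (bm_gy y) (bm_cst N^-1)) ?RI_cst //.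
  exact: gU.
have PY' : mu (Y @^-1` Ycal) = 1%E := PY.
have pN y : ~ Ycal y -> mu [set w | Y w = y] = 0%E.
  move=> nY; apply/eqP; rewrite eq_le measure_ge0 andbT.
  have hC : mu (~` (Y @^-1` Ycal)) = (1 - mu (Y @^-1` Ycal))%E :=
    probability_setC P (mpre Ycal).
  rewrite PY' subee // in hC.
  rewrite -hC; apply: le_measure; rewrite ?inE //.
  - exact: measurableC (mpre _).
  - by move=> w /= ->.
have suppE : supp P Y = Ycal.
  apply/seteqP; split => y /=.
    move=> hy; apply: contrapT => nY; move: hy; rewrite /supp /=.
    change ((0 < mu [set w | Y w = y])%E -> False); by rewrite pN // ltxx.
  move=> Yy; rewrite /supp /=; change (0 < mu [set w | Y w = y])%E.
  by rewrite pY // lte_fin invr_gt0.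
have Iub := int_ub_n fY PY' (ltnW N2).
have Ilb : ((1 - N^-1)%:E <= \int[P]_w tv (f (W w)) (g (Z w)))%E.
  pose I y := \1_[set w | Y w = y] : Omega -> R.
  have bI y : bm (I y) := bm_ind (mY y).
  pose c y w := 2 * I y w - 1.
  have bc y : bm (c y) by apply: bmB; [exact: bmZ | exact: bm_cst].
  pose L w := 2^-1 * \sum_(y <- s) (fy y w - gy y w) * c y w.
  have bL : bm L.
    apply: bmZ; apply: bm_sum => y; apply: bmM' => //.
    exact: bmB (bm_fy y) (bm_gy y).
  have iT : P.-integrable setT (fun w => tv (f (W w)) (g (Z w))).
    apply/integrableP; split; first exact: mT.
    rewrite (eq_integral (fun w => tv (f (W w)) (g (Z w)))); last first.
      by move=> w _; rewrite gee0_abs // tv_ge0.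
    by apply: le_lt_trans I1 _; rewrite ltry.
  apply: le_trans (_ : _ <= \int[P]_w (L w)%:E)%E _; last first.
    apply: le_integral => //; first exact: bm_int.
    move=> w _; apply: tv_lb (fset_uniq s) _ => y.
    by rewrite /c /I indicE; case: (_ \in _); rewrite ?mulr1 ?mulr0;
      [rewrite (_ : 2 - 1 = 1) ?normr1 //; lra | rewrite sub0r normrN normr1].
  rewrite (RI_E bL) lee_fin le_eqVlt; apply/orP; left; apply/eqP.
  rewrite /L RI_Z; last by apply: bm_sum => y; apply: bmM' => //; exact: bmB (bm_fy y) (bm_gy y).
  rewrite RI_sum; last by move=> y; apply: bmM' => //; exact: bmB (bm_fy y) (bm_gy y).
  rewrite big_seq (eq_bigr (fun=> 2 * N^-1 - 2 * N^-1 ^+ 2)) -?big_seq; last first.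
    move=> y; rewrite in_fset_set // inE => Yy.
    have -> : (fun w => (fy y w - gy y w) * c y w) =
       (fun w => (2 * (fy y w * I y w) - fy y w) - (2 * (gy y w * I y w) - gy y w)).
      by apply/funext => w; rewrite /c; ring.
    have bfI : bm (fun w => fy y w * I y w) by apply: bmM' => //; exact: bm_fy.
    have bgI : bm (fun w => gy y w * I y w) by apply: bmM' => //; exact: bm_gy.
    rewrite RI_B; last 2 first.
      by apply: bmB; [exact: bmZ | exact: bm_fy].
      by apply: bmB; [exact: bmZ | exact: bm_gy].
    rewrite RI_B; [|exact: bmZ|exact: bm_fy].
    rewrite RI_B; [|exact: bmZ|exact: bm_gy].
    rewrite !RI_Z // RIf RIg /p pY //=.
    have -> : RI (fun w => gy y w * I y w) = N^-1 * N^-1.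
      rewrite (RI_ae bgI (bmZ N^-1 (bI y))); last first.
        by apply: filterS (gU y Yy) => w /=; rewrite /gy => ->.
      by rewrite RI_Z // RI_ind ?pY //.
    have -> : RI (fun w => fy y w * I y w) = N^-1.
      have mhy : measurable (h @^-1` [set y]).
        by rewrite -[_ @^-1` _]setTI; apply: mh.
      have hc := cf.2.2 y (h @^-1` [set y]) mhy.
      have eS : [set w | Y w = y] = (fun w => (X w, Z w)) @^-1` (h @^-1` [set y]).
        by apply/seteqP; split => w /=; rewrite hY.
      rewrite -eS setIid in hc.
      apply: EFin_inj; rewrite -(RI_E bfI) -(pY y Yy).
      transitivity (\int[P]_(w in [set w | Y w = y]) (fy y w)%:E)%E; last first.
        exact: (esym hc).
      rewrite [RHS]integral_mkcond; apply: eq_integral => w _.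
      by rewrite epatch_indic /= EFinM.
    by rewrite expr2; ring.
  rewrite sum_cst_seq -/N; field; rewrite ?gt_eqF //.
rewrite /ETV suppE /etv_factor; destruct (pselect (finite_set Ycal)) as [fY2|nf]; last by exfalso; exact: nf fY.
have -> : (\int[P]_w tv (f (X w, Z w)) (g (Z w)) = (1 - N^-1)%:E)%E.
  by apply/le_anti/andP; split.
by rewrite -EFinM mulVf // gt_eqF // subr_gt0.
Qed.

End main.

Unset Implicit Arguments.
Set Strict Implicit.

Theorem lemma1 (R : realType) (d dX dZ : measure_display)
  (Omega : measurableType d) (TX : measurableType dX) (TZ : measurableType dZ)
  (P : probability Omega R)
  (X : Omega -> TX) (Y : Omega -> nat) (Z : Omega -> TZ)
  (Ycal : set nat) (f : TX * TZ -> nat -> R) (g : TZ -> nat -> R) :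
  measurable_fun setT X -> measurable_fun setT Z ->
  (forall y, measurable [set w | Y w = y]) ->
  countable Ycal -> P (Y @^-1` Ycal) = 1%E ->
  cond_pmf P Y (fun w => (X w, Z w)) f ->
  cond_pmf P Y Z g ->
  ((0 <= ETV P X Y Z f g)%E /\ (ETV P X Y Z f g <= 1)%E) /\
  (finite_set Ycal -> (1 < #|` fset_set Ycal |%fset)%N ->
   (exists h : TX * TZ -> nat, measurable_fun setT h /\
      forall w, Y w = h (X w, Z w)) ->
   (forall y, Ycal y ->
      {ae P, forall w, g (Z w) y = (#|` fset_set Ycal |%fset%:R)^-1}) ->
   ETV P X Y Z f g = 1%E).
Proof.
move=> mX mZ mY _ PY cf cg; split.
  exact: (part1 mX mZ mY cf cg).
move=> fY N2 hh gU.
exact: (part2 mX mZ mY cf cg fY N2 hh gU PY).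
Qed.
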